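(* For integers $q\ge1$, $a$, $n$ let $S(q,a,n)=\sum_{x=1}^q e\big(\frac{ax^2+nx}{q}\big)$, and for integers $n_1,n_2,n_3,m$ let $$T(q;n_1,n_2,n_3,m)=\sum_{\substack{a=1\\ (a,q)=1}}^q S(q,a,n_1)S(q,a,n_2)S(q,a,n_3)\,e\Big(\frac{\overline{a}\,m}{q}\Big),$$ where $\overline{a}$ is the inverse of $a$ modulo $q$. Then for every positive integer $r$ and all integers $n_1,n_2,n_3,m$, $$|T(2^r;n_1,n_2,n_3,m)|\le 2^{2+5r/2}.$$
   Context: $e(z)=e^{2\pi i z}$. *)

(* Defs.v *)
From HB Require Import structures.
From mathcomp Require Import all_boot all_order all_algebra.
From mathcomp Require Import all_classical all_reals all_analysis.
From mathcomp Require Import complex.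
Set Implicit Arguments. Unset Strict Implicit. Unset Printing Implicit Defensive.
Import Order.TTheory GRing.Theory Num.Theory.
Local Open Scope ring_scope.
Local Open Scope complex_scope.

Definition ee (R : realType) (z : R) : R[i] :=
  (cos (2 * pi * z)) +i* (sin (2 * pi * z)).

Definition Ssum (R : realType) (q : nat) (a n : int) : R[i] :=
  \sum_(1 <= x < q.+1) ee ((a * (x%:Z) ^+ 2 + n * x%:Z)%:~R / (q%:R : R)).

(* an inverse of a modulo q, taken in [0, q) (0 if none exists) *)
Definition inv_mod (q a : nat) : nat :=
  odflt 0%N (omap (@nat_of_ord q) [pick b : 'I_q | (a * b == 1 %[mod q])%N]).

Definition Tsum (R : realType) (q : nat) (n1 n2 n3 m : int) : R[i] :=
  \sum_(1 <= a < q.+1 | coprime a q)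
    Ssum R q a n1 * Ssum R q a n2 * Ssum R q a n3
    * ee (((inv_mod q a)%:Z * m)%:~R / (q%:R : R)).

(* Main.v *)
Require Import Defs.
From HB Require Import structures.
From mathcomp Require Import all_boot all_order all_algebra.
From mathcomp Require Import all_classical all_reals all_analysis.
From mathcomp Require Import complex.
From mathcomp Require Import ring lra.
Import Order.TTheory GRing.Theory Num.Theory.
Local Open Scope ring_scope.
Local Open Scope complex_scope.


Section E.
Variable R : realType.

Lemma eeD (x y : R) : ee (x + y) = ee x * ee y.
Proof.
rewrite /ee mulrDr cosD sinD.
by apply/eqP; rewrite eq_complex /= !eqxx /= addrC eqxx.
Qed.

Lemma ee0 : ee (0 : R) = 1.
Proof. by rewrite /ee mulr0 cos0 sin0. Qed.

Lemma ee1 : ee (1 : R) = 1.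
Proof. by rewrite /ee mulr1 mulr_natl cos2pi sin2pi. Qed.

Lemma ee_nat (n : nat) : ee (n%:R : R) = 1.
Proof. elim: n => [|n IH]; first by rewrite ee0. by rewrite -addn1 natrD eeD IH ee1 mulr1. Qed.

Lemma eeN (x : R) : ee (- x) = (ee x)^*.
Proof. by rewrite /ee /conjc mulrN cosN sinN. Qed.

Lemma ee_int (k : int) : ee (k%:~R : R) = 1.
Proof.
case: k => n; first exact: ee_nat.
rewrite NegzE mulrNz eeN; rewrite -pmulrn ee_nat.
by rewrite /conjc /= oppr0.
Qed.

Lemma ee_half : ee (1 / 2 : R) = -1.
Proof.
have h : (2:R) * pi * (1/2) = pi by rewrite mul1r mulrAC divff ?mul1r // pnatr_eq0.
rewrite /ee h cospi sinpi.
by apply/eqP; rewrite eq_complex /= oppr0 !eqxx.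
Qed.

Lemma norm_ee (x : R) : `|ee x| = 1.
Proof. by rewrite normc_def /= cos2Dsin2 sqrtr1. Qed.

Definition E (q : nat) (j : int) : R[i] := ee (j%:~R / (q%:R : R)).

Lemma ED q j k : E q (j + k) = E q j * E q k.
Proof. by rewrite /E intrD mulrDl eeD. Qed.

Lemma E_mulq q t : (0 < q)%N -> E q (q%:Z * t) = 1.
Proof.
move=> q0; rewrite /E intrM mulrAC pmulrn divff ?mul1r ?ee_int //.
by rewrite pnatr_eq0 -lt0n.
Qed.

Lemma E_conj q j : (E q j)^* = E q (- j).
Proof. by rewrite /E -eeN mulrNz mulNr. Qed.

Lemma norm_E q j : `|E q j| = 1.
Proof. exact: norm_ee. Qed.

Lemma E_double q j : (0 < q)%N -> E (2 * q)%N (Posz (2 * j)%N) = E q (Posz j).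
Proof.
move=> q0; rewrite /E -!pmulrn !natrM invfM mulrACA divff ?mul1r // pnatr_eq0 -lt0n.
Qed.

Lemma E_halfodd q k : (0 < q)%N -> odd k -> E (2 * q)%N (Posz (k * q)%N) = -1.
Proof.
move=> q0 ok; rewrite /E -!pmulrn !natrM invfM mulrACA divff ?mulr1; last by rewrite pnatr_eq0 -lt0n.
rewrite -(odd_double_half k) ok add1n.
have -> : (((k./2).*2.+1)%:R / 2 : R) = (k./2)%:R + 1/2.
  rewrite -addn1 natrD -muln2 natrM mulrDl mulfK ?pnatr_eq0 //.
by rewrite eeD ee_nat mul1r ee_half.
Qed.
End E.


Section G.
Variable R : realType.
Definition G (q k : nat) : R[i] := \sum_(y < q) E R q (Posz (k * y)).

Lemma G_split q k : (0 < q)%N -> G (2 * q) k =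
  (\sum_(y < q) E R (2 * q) (Posz (k * y))) * (1 + E R (2 * q) (Posz (k * q))).
Proof.
move=> q0; rewrite /G mul2n -addnn big_split_ord /= mulrDr mulr1 big_distrl /=.
congr (_ + _); apply: eq_bigr => i _.
by rewrite -ED -PoszD addnC mulnDr.
Qed.

Lemma G0 r k : ~~ (2 ^ r %| k)%N -> G (2 ^ r) k = 0.
Proof.
elim: r k => [|r IH] k; first by rewrite expn0 dvd1n.
move=> nd; rewrite expnS G_split ?expn_gt0 //.
case ok: (odd k).
  by rewrite E_halfodd ?expn_gt0 // subrr mulr0.
have hk : k = (2 * k./2)%N by rewrite -{1}(odd_double_half k) ok add0n -mul2n.
rewrite hk.
under eq_bigr => y _ do rewrite -mulnA E_double ?expn_gt0 //.
rewrite /G in IH; rewrite IH ?mul0r //.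
apply: contra nd; rewrite hk expnS => h; rewrite dvdn_pmul2l //; by rewrite mul2n doubleK in h.
Qed.

Lemma sum_shift (q : nat) (g : nat -> R[i]) : (forall x, g (x + q)%N = g x) ->
  forall y, \sum_(x < q) g (x + y)%N = \sum_(x < q) g x.
Proof.
case: q => [|m] per y; first by rewrite !big_ord0.
elim: y => [|y IH]; first by under eq_bigr do rewrite addn0.
rewrite -IH.
have h1 := @big_ord_recl _ 0 +%R m.+1 (fun i : 'I_m.+2 => g (i + y)%N).
have h2 := @big_ord_recr _ 0 +%R m.+1 (fun i : 'I_m.+2 => g (i + y)%N).
rewrite h2 /= addnC per addrC in h1; move/addrI: h1 => ->.
by apply: eq_bigr => i _; rewrite /bump /= add1n addnS.
Qed.

Definition fS (a : nat) (n : int) (x : nat) : int := a%:Z * x%:Z ^+ 2 + n * x%:Z.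

Lemma fS_per q a n x : E R q (fS a n (x + q)%N) = E R q (fS a n x).
Proof.
case: (posnP q) => [->|q0]; first by rewrite addn0.
have -> : fS a n (x + q)%N = fS a n x + q%:Z * (a%:Z * (2 * x%:Z + q%:Z) + n).
  by rewrite /fS PoszD; ring.
by rewrite ED E_mulq // mulr1.
Qed.

Lemma Ssum_E q (a : nat) n : Ssum R q a n = \sum_(x < q) E R q (fS a n x).
Proof.
rewrite /Ssum big_add1 /= big_mkord.
rewrite -(sum_shift q (fun x => E R q (fS a n x)) (fS_per q a n) 1).
by apply: eq_bigr => i _; rewrite addn1.
Qed.
End G.



Lemma sum_if0 (m C : nat) : (0 < m)%N ->
  (\sum_(i < m) (if (i : nat) == 0%N then C else 0%N) = C)%N.
Proof.
case: m => // m _; rewrite big_ord_recl /= big1 ?addn0 // => i _.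
Qed.

Lemma count_lem (s a : nat) : odd a ->
  (\sum_(x < 2 ^ s.+1) (if (2 ^ s.+1 %| 2 * a * x)%N then 2 ^ s.+1 else 0) <= 2 * 2 ^ s.+1)%N.
Proof.
move=> oa.
have cop : coprime (2 ^ s) a by apply: coprimeXl; rewrite coprime2n.
have cond x : (2 ^ s.+1 %| 2 * a * x)%N = (2 ^ s %| x)%N.
  by rewrite expnS -mulnA dvdn_pmul2l // Gauss_dvdr.
have small x : (x < 2 ^ s)%N -> (2 ^ s %| x)%N = (x == 0%N).
  move=> lx; case: (posnP x) => [->|xp]; first by rewrite dvdn0.
  apply/negbTE/negP => /(dvdn_leq xp); by rewrite leqNgt lx.
under eq_bigr do rewrite cond.
have e : (2 ^ s.+1 = 2 ^ s + 2 ^ s)%N by rewrite expnS mul2n addnn.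
rewrite e big_split_ord /=.
rewrite (eq_bigr (fun i : 'I_(2^s) => if (i : nat) == 0%N then 2 ^ s + 2 ^ s else 0)%N); last first.
  by move=> i _; rewrite small.
rewrite [X in (_ + X <= _)%N](eq_bigr (fun i : 'I_(2^s) => if (i : nat) == 0%N then 2 ^ s + 2 ^ s else 0)%N); last first.
  by move=> i _; rewrite dvdn_addr // small.
by rewrite !sum_if0 ?expn_gt0 // mul2n -addnn.
Qed.

Section S.
Variable R : realType.

Lemma E_conj' q j : (E R q j)^*%C = E R q (- j).
Proof. exact: E_conj. Qed.

Lemma sqnormS q (a : nat) n : `|Ssum R q a n| ^+ 2 =
  \sum_(x < q) E R q (fS a n x) * G R q (2 * a * x).
Proof.
rewrite sqr_normc Ssum_E rmorph_sum big_distrr.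
have H (y : 'I_q) : (\sum_(x < q) E R q (fS a n x)) * (E R q (fS a n y))^*%C =
   \sum_(x < q) E R q (fS a n x) * E R q (Posz (2 * a * x * y)).
  rewrite big_distrl /=.
  rewrite -(sum_shift R q (fun x => E R q (fS a n x) * (E R q (fS a n y))^*%C) _ y); last first.
    by move=> x; rewrite fS_per.
  apply: eq_bigr => x _; rewrite E_conj' -!ED; congr (E R q _).
  by rewrite /fS !PoszM !PoszD; ring.
rewrite (eq_bigr _ (fun y _ => H y)) exchange_big /=.
by apply: eq_bigr => x _; rewrite -big_distrr.
Qed.

Lemma normG r k : `|G R (2 ^ r) k| <= ((if (2 ^ r %| k)%N then 2 ^ r else 0)%N)%:R.
Proof.
case: ifP => h; last by rewrite G0 ?h // normr0.
apply: le_trans (ler_norm_sum _ _ _) _.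
under eq_bigr do rewrite norm_E.
by rewrite sumr_const card_ord.
Qed.

Lemma sqnormS_le r (a : nat) n : odd a -> (0 < r)%N ->
  `|Ssum R (2 ^ r) a n| ^+ 2 <= (2 * 2 ^ r)%N%:R.
Proof.
move=> oa; case: r => // s _.
rewrite -[X in X <= _]ger0_norm ?exprn_ge0 // sqnormS.
apply: le_trans (ler_norm_sum _ _ _) _.
under eq_bigr do rewrite normrM norm_E mul1r.
apply: le_trans; first by apply: ler_sum => x _; exact: normG.
by rewrite -natr_sum ler_nat count_lem.
Qed.
End S.



Section F.
Variable R : realType.

Definition cc (r : nat) : R := 2 `^ ((r%:R + 1) / 2).

Lemma cc_ge0 r : 0 <= cc r. Proof. exact: powR_ge0. Qed.

Lemma ccX r k : cc r ^+ k = 2 `^ ((r%:R + 1) / 2 * k%:R).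
Proof. by rewrite /cc -powR_mulrn ?powR_ge0 // -powRrM. Qed.

Lemma cc2 r : cc r ^+ 2 = (2 * 2 ^ r)%N%:R.
Proof.
rewrite ccX divfK ?pnatr_eq0 // -expnS natrX -powR_mulrn // natr1.
by [].
Qed.

Lemma real_bound r : cc r ^+ 3 *+ 2 ^ r <= 2 `^ (2 + 5 * r%:R / 2).
Proof.
rewrite ccX -mulr_natr natrX -powR_mulrn // -powRD; last by apply/implyP => _; rewrite pnatr_eq0.
apply: (@ler_powR R); first by rewrite ler1n.
lra.
Qed.

Lemma normS_le r (a : nat) n : odd a -> (0 < r)%N ->
  `|Ssum R (2 ^ r) a n| <= (cc r)%:C.
Proof.
move=> oa r0.
rewrite -(@ler_pXn2r _ 2) //; last by rewrite nnegrE ler0c cc_ge0.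
rewrite -[(cc r)%:C ^+ 2]rmorphXn cc2 rmorph_nat.
exact: sqnormS_le.
Qed.
End F.

Theorem lemma3p6 (R : realType) (r : nat) (n1 n2 n3 m : int) :
  (0 < r)%N ->
  `|Tsum R (2 ^ r)%N n1 n2 n3 m| <=
    ((2 : R) `^ (2 + 5 * r%:R / 2))%:C.
Proof.
move=> r0.
set B : R[i] := (cc R r)%:C * (cc R r)%:C * (cc R r)%:C.
have B0 : 0 <= B by rewrite !mulr_ge0 // ler0c cc_ge0.
rewrite /Tsum; apply: le_trans (ler_norm_sum _ _ _) _.
apply: (@le_trans _ _ (\sum_(1 <= a < (2 ^ r).+1 | coprime a (2 ^ r)) B)).
  apply: ler_sum => a cop.
  have oa : odd a by rewrite -coprimen2 -(coprime_pexpr _ _ r0).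
  rewrite !normrM norm_ee mulr1.
  have hs (k : int) := normS_le R r a k oa r0.
  apply: ler_pM; rewrite ?mulr_ge0 ?normr_ge0 ?hs //.
  by apply: ler_pM; rewrite ?normr_ge0 ?hs.
apply: (@le_trans _ _ (\sum_(1 <= a < (2 ^ r).+1) B)).
  rewrite big_mkcond /=; apply: ler_sum => a _; by case: ifP.
rewrite sumr_const_nat subn1 /=.
have -> : B *+ 2 ^ r = ((cc R r ^+ 3) *+ 2 ^ r)%:C.
  by rewrite rmorphMn rmorphXn /B !exprS expr0 mulr1 mulrA.
by rewrite lecR real_bound.
Qed.
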